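(* Let $X=(X_1,\dots,X_d)$ be a random vector with values in $\{0,1\}^d$ such that $\mathbb{P}(X=x)>0$ for every $x\in\{0,1\}^d$, and let $G:\{0,1\}^d\to\mathbb{R}$. Suppose there exist a subset $\mathcal{C}\subseteq D:=\{1,\dots,d\}$ with $|\mathcal{C}|<d$ and a function $H:\{0,1\}^{|\mathcal{C}|}\to\mathbb{R}$ such that $G(X)=H(X_{\mathcal{C}})$ almost surely. Write the expansions $$G(X)=\sum_{A\subseteq D}\beta^{(G)}_A e_A(X_A),\qquad H(X_{\mathcal{C}})=\sum_{A\subseteq \mathcal{C}}\beta^{(H)}_A e_A(X_A),$$ where the coefficients are the unique real coefficients for which these identities hold almost surely. Then for every $A\subseteq D$: $\beta^{(G)}_A=\beta^{(H)}_A$ if $A\subseteq\mathcal{C}$, and $\beta^{(G)}_A=0$ if $A\not\subseteq\mathcal{C}$.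
   Context: For $A\subseteq D$, $X_A:=(X_i)_{i\in A}$, $\mathbf{P}_A(x_A):=\mathbb{P}(X_A=x_A)$, and $e_A(X_A):=\dfrac{(-1)^{\sum_{j\in A}X_j}}{\mathbf{P}_A(X_A)}$, with $e_\emptyset(X_\emptyset)=1$. Under the full-support hypothesis, $\{e_A(X_A)\}_{A\subseteq D}$ (resp. $\{e_A(X_A)\}_{A\subseteq\mathcal{C}}$) is a basis of the space of real functions of $X$ (resp. of $X_{\mathcal{C}}$), so the coefficients in the two expansions exist and are unique. *)

(* Defs.v *)
From mathcomp Require Import all_boot all_order all_algebra.
Set Implicit Arguments. Unset Strict Implicit. Unset Printing Implicit Defensive.
Import Order.TTheory GRing.Theory Num.Theory.
Local Open Scope ring_scope.

(* Points of {0,1}^d: boolean vectors indexed by D = 'I_d (true = 1). *)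
Notation cube d := {ffun 'I_d -> bool}.

Definition marg (R : realFieldType) (d : nat) (p : cube d -> R) (A : {set 'I_d})
  (x : cube d) : R :=
  \sum_(y : cube d | [forall j in A, y j == x j]) p y.

Definition eA (R : realFieldType) (d : nat) (p : cube d -> R) (A : {set 'I_d})
  (x : cube d) : R :=
  (-1) ^+ (\sum_(j in A) (x j : nat))%N / marg p A x.

(* x_C viewed as an element of {0,1}^{|C|}, coordinates of C in increasing order. *)
Definition restr (d : nat) (C : {set 'I_d}) (x : cube d) : {ffun 'I_#|C| -> bool} :=
  [ffun i => x (enum_val i)].

(* Main.v *)
Require Import Defs.
From mathcomp Require Import all_boot all_order all_algebra.
From mathcomp Require Import lra zify.
Import Order.TTheory GRing.Theory Num.Theory.
Local Open Scope ring_scope.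
Set Implicit Arguments. Unset Strict Implicit.

Definition flip (d : nat) (j : 'I_d) (y : cube d) : cube d :=
  [ffun i => if i == j then ~~ y i else y i].

Lemma flipK d (j : 'I_d) : involutive (flip j).
Proof.
move=> y; apply/ffunP => i; rewrite !ffunE; case: eqP => // _; exact: negbK.
Qed.

Definition sgn (R : realFieldType) d (B : {set 'I_d}) (y : cube d) : R :=
  (-1) ^+ (\sum_(i in B) (y i : nat))%N.

Lemma sgn_flip (R : realFieldType) d (B : {set 'I_d}) j y :
  j \in B -> sgn R B (flip j y) = - sgn R B y.
Proof.
move=> jB; rewrite /sgn (bigD1 j jB) [in RHS](bigD1 j jB) /= !exprD ffunE eqxx.
have -> : (\sum_(i in B | i != j) (flip j y i : nat))%N
        = (\sum_(i in B | i != j) (y i : nat))%N.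
  by apply: eq_bigr => i /andP [_ /negbTE hij]; rewrite ffunE hij.
by case: (y j) => /=; rewrite ?expr0 ?expr1 ?mul1r ?mulN1r ?opprK.
Qed.

Lemma eA_flip (R : realFieldType) d (p : cube d -> R) (A : {set 'I_d}) (j : 'I_d) (y : cube d) :
  j \notin A -> eA p A (flip j y) = eA p A y.
Proof.
move=> jA; rewrite /eA /marg.
have -> : (\sum_(i in A) (flip j y i : nat))%N = (\sum_(i in A) (y i : nat))%N.
  apply: eq_bigr => i iA; rewrite ffunE; case: eqP => // eij.
  by move: iA; rewrite eij (negbTE jA).
congr (_ / _); apply: eq_bigl => y'; apply: eq_forallb => i.
rewrite ffunE; case: (eqVneq i j) => [->|_] //; by rewrite (negbTE jA).
Qed.

Lemma T_van (R : realFieldType) d (p : cube d -> R) (A B : {set 'I_d}) j :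
  j \in B -> j \notin A -> \sum_y sgn R B y * eA p A y = 0.
Proof.
move=> jB jA; set S := \sum_y _.
have hS : S = - S.
  rewrite {1}/S (reindex_inj (can_inj (flipK j))) /= -sumrN.
  by apply: eq_bigr => y _; rewrite sgn_flip // eA_flip // mulNr.
lra.
Qed.

Lemma marg_gt0 (R : realFieldType) d (p : cube d -> R) A x :
  (forall x, 0 < p x) -> 0 < marg p A x.
Proof.
move=> pp; rewrite /marg (bigD1 x) /=; last by apply/forallP => i; apply/implyP.
have := pp x; have : 0 <= \sum_(i : cube d | [forall j in A, i j == x j] && (i != x)) p i.
  by apply: sumr_ge0 => i _; apply: ltW.
lra.
Qed.

Lemma S_pos (R : realFieldType) d (p : cube d -> R) B :
  (forall x, 0 < p x) -> 0 < \sum_y sgn R B y * eA p B y.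
Proof.
move=> pp; rewrite (bigD1 [ffun=> false]) //=.
have h : forall y, sgn R B y * eA p B y = (marg p B y)^-1.
  by move=> y; rewrite /eA /sgn mulrA -expr2 sqrr_sign mul1r.
rewrite h; have := marg_gt0 B [ffun=> false] pp; rewrite -invr_gt0 => h1.
have : 0 <= \sum_(i | i != [ffun=> false]) sgn R B i * eA p B i.
  apply: sumr_ge0 => i _; rewrite h invr_ge0; apply: ltW; exact: marg_gt0.
lra.
Qed.

Lemma key (R : realFieldType) d (p : cube d -> R) (c : {set 'I_d} -> R) :
  (forall x, 0 < p x) ->
  (forall x, \sum_(A : {set 'I_d}) c A * eA p A x = 0) ->
  forall B : {set 'I_d}, (forall A : {set 'I_d}, B \proper A -> c A = 0) -> c B = 0.
Proof.
move=> pp hf B hB.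
have h0 : \sum_y sgn R B y * (\sum_A c A * eA p A y) = 0.
  by apply: big1 => y _; rewrite hf mulr0.
have h1 : \sum_(A : {set 'I_d}) \sum_y sgn R B y * (c A * eA p A y) = 0.
  by rewrite exchange_big /= -[RHS]h0; apply: eq_bigr => y _; rewrite mulr_sumr.
move: h1; rewrite (bigD1 B) //= [X in _ + X]big1; last first.
  move=> A nAB; case: (boolP (B \subset A)) => sBA.
    by rewrite big1 // => y _; rewrite hB ?mul0r ?mulr0 // properEneq eq_sym nAB.
  have [j jB jA] : exists2 j, j \in B & j \notin A.
    by move/subsetPn: sBA => [j ? ?]; exists j.
  have -> : \sum_y sgn R B y * (c A * eA p A y) = c A * \sum_y sgn R B y * eA p A y.
    by rewrite mulr_sumr; apply: eq_bigr => y _; rewrite mulrCA.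
  by rewrite (T_van p (A:=A) jB jA) mulr0.
rewrite addr0.
have -> : \sum_y sgn R B y * (c B * eA p B y) = c B * \sum_y sgn R B y * eA p B y.
  by rewrite mulr_sumr; apply: eq_bigr => y _; rewrite mulrCA.
move/eqP; rewrite mulf_eq0 => /orP [/eqP //|/eqP h].
by have := S_pos B pp; rewrite h ltxx.
Qed.

Lemma all_zero (R : realFieldType) d (p : cube d -> R) (c : {set 'I_d} -> R) :
  (forall x, 0 < p x) ->
  (forall x, \sum_(A : {set 'I_d}) c A * eA p A x = 0) -> forall B, c B = 0.
Proof.
move=> pp hf.
suff: forall n (B : {set 'I_d}), (d - #|B| <= n)%N -> c B = 0 by move=> h B; exact: (h _ B (leqnn _)).
elim=> [|n IH] B hn; apply: (key pp hf) => A hBA.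
  have := proper_card hBA; have := max_card A; rewrite card_ord; lia.
apply: IH; have := proper_card hBA; have := max_card A; rewrite card_ord; lia.
Qed.

Theorem corollary2 (R : realFieldType) (d : nat) (p : {ffun 'I_d -> bool} -> R)
  (p_pos : forall x, 0 < p x) (p_sum : \sum_x p x = 1)
  (G : {ffun 'I_d -> bool} -> R) (C : {set 'I_d}) (hC : (#|C| < d)%N)
  (H : {ffun 'I_#|C| -> bool} -> R)
  (hGH : forall x, 0 < p x -> G x = H (restr C x))
  (betaG betaH : {set 'I_d} -> R)
  (hbG : forall x, 0 < p x -> G x = \sum_(A : {set 'I_d}) betaG A * eA p A x)
  (hbH : forall x, 0 < p x ->
     H (restr C x) = \sum_(A : {set 'I_d} | A \subset C) betaH A * eA p A x) :
  forall A : {set 'I_d},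
    betaG A = (if A \subset C then betaH A else 0).
Proof.
move=> A; apply/eqP; rewrite -subr_eq0; apply/eqP.
pose c B := betaG B - (if B \subset C then betaH B else 0).
apply: (all_zero (c := c) p_pos) => x.
rewrite /c; under eq_bigr => B _ do rewrite mulrBl.
rewrite sumrB -hbG // hGH // hbH // big_mkcond /=.
apply/eqP; rewrite subr_eq0; apply/eqP.
by apply: eq_bigr => B _; case: ifP; rewrite ?mul0r.
Qed.
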